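(* Let $c_{\min}\le c_{\max}$ and $d_{\min}\le d_{\max}$ be integers, $T=\{c_{\min},\dots,c_{\max}\}\times\{d_{\min},\dots,d_{\max}\}$, $a:T\to[0,1]$ and $p:T\to\mathbb{R}$. For $(c,d),(c',d')\in T$ write $(c,d)\to(c',d')$ for the inequality $p_{c,d}-c\,a_{c,d}\ge p_{c',d'}-c\,a_{c',d'}$. Assume $a$ is monotonic: $a_{c,d}\ge a_{c',d'}$ whenever $c\le c'$ and $d\ge d'$. Suppose that for every $(c,d)\in T$ the adjacent constraints hold: $(c,d)\to(c+1,d)$ if $c<c_{\max}$, $(c,d)\to(c-1,d)$ if $c>c_{\min}$, and $(c,d)\to(c,d-1)$ if $d>d_{\min}$. Then for every $(c,d)\in T$: $(c,d)\to(c',d)$ holds for every $c'\in\{c_{\min},\dots,c_{\max}\}$, and $(c,d)\to(c,d')$ holds for every $d'\in\{d_{\min},\dots,d\}$.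
   Context: $a_{c,d}$ is the interim winning probability and $p_{c,d}$ the expected payment of a bidder reporting type $(c,d)$ (cost $c$, predicted path duration $d$); a bidder of true cost $c$ winning with probability $a$ has expected cost $c\,a$. The inequality $(c,d)\to(c',d')$ is the incentive-compatibility constraint for a bidder of true type $(c,d)$ misreporting $(c',d')$. The ''adjacent'' constraints are those where the report differs from the true type by one unit in one coordinate. *)

(* Defs.v *)
From Stdlib Require Import Reals ZArith Lra Lia.
Open Scope R_scope.

Definition inT (cmin cmax dmin dmax c d : Z) : Prop :=
  (cmin <= c <= cmax)%Z /\ (dmin <= d <= dmax)%Z.

Definition ic (a p : Z -> Z -> R) (c d c' d' : Z) : Prop :=
  p c d - IZR c * a c d >= p c' d' - IZR c * a c' d'.

(* Main.v *)
Require Import Defs.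
From Stdlib Require Import Reals ZArith Lra Lia.
Open Scope R_scope.

Theorem lemma2 (cmin cmax dmin dmax : Z) (a p : Z -> Z -> R)
  (Hc : (cmin <= cmax)%Z) (Hd : (dmin <= dmax)%Z)
  (Ha01 : forall c d, inT cmin cmax dmin dmax c d -> 0 <= a c d <= 1)
  (Hmono : forall c d c' d', inT cmin cmax dmin dmax c d ->
      inT cmin cmax dmin dmax c' d' -> (c <= c')%Z -> (d' <= d)%Z ->
      a c d >= a c' d')
  (Hup : forall c d, inT cmin cmax dmin dmax c d -> (c < cmax)%Z ->
      ic a p c d (c + 1)%Z d)
  (Hdown : forall c d, inT cmin cmax dmin dmax c d -> (cmin < c)%Z ->
      ic a p c d (c - 1)%Z d)
  (Hdd : forall c d, inT cmin cmax dmin dmax c d -> (dmin < d)%Z ->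
      ic a p c d c (d - 1)%Z) :
  forall c d, inT cmin cmax dmin dmax c d ->
    (forall c', (cmin <= c' <= cmax)%Z -> ic a p c d c' d) /\
    (forall d', (dmin <= d' <= d)%Z -> ic a p c d c d').
Proof.
  intros c d HT.
  assert (Hrefl : forall x y, ic a p c d x y -> True) by auto.
  split.
  - intros c' Hc'.
    destruct (Z_le_gt_dec c c') as [Hle|Hgt].
    + assert (Hgen : forall k : nat, (c + Z.of_nat k <= cmax)%Z ->
                ic a p c d (c + Z.of_nat k)%Z d).
      { induction k as [|k IH]; intros Hk.
        - unfold ic. rewrite Z.add_0_r. lra.
        - assert (Hx : (Z.of_nat (S k) = Z.of_nat k + 1)%Z) by lia.
          rewrite Hx. rewrite Z.add_assoc.
          set (x := (c + Z.of_nat k)%Z) in *.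
          specialize (IH ltac:(lia)).
          destruct HT as [HT1 HT2].
          assert (HxT : inT cmin cmax dmin dmax x d) by (split; lia).
          assert (Hs := Hup x d HxT ltac:(lia)).
          assert (Hm := Hmono x d (x+1)%Z d HxT ltac:(split; lia) ltac:(lia) ltac:(lia)).
          assert (Hcx : IZR c <= IZR x) by (apply IZR_le; lia).
          assert (Hpr : 0 <= (IZR x - IZR c) * (a x d - a (x+1)%Z d))
            by (apply Rmult_le_pos; lra).
          unfold ic in *. lra. }
      replace c' with (c + Z.of_nat (Z.to_nat (c' - c)))%Z by lia.
      apply Hgen. lia.
    + assert (Hgen : forall k : nat, (cmin <= c - Z.of_nat k)%Z ->
                ic a p c d (c - Z.of_nat k)%Z d).
      { induction k as [|k IH]; intros Hk.
        - unfold ic. rewrite Z.sub_0_r. lra.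
        - assert (Hx : (c - Z.of_nat (S k) = (c - Z.of_nat k) - 1)%Z) by lia.
          rewrite Hx.
          set (x := (c - Z.of_nat k)%Z) in *.
          specialize (IH ltac:(lia)).
          destruct HT as [HT1 HT2].
          assert (HxT : inT cmin cmax dmin dmax x d) by (split; lia).
          assert (Hs := Hdown x d HxT ltac:(lia)).
          assert (Hm := Hmono (x-1)%Z d x d ltac:(split; lia) HxT ltac:(lia) ltac:(lia)).
          assert (Hcx : IZR x <= IZR c) by (apply IZR_le; lia).
          assert (Hpr : 0 <= (IZR c - IZR x) * (a (x-1)%Z d - a x d))
            by (apply Rmult_le_pos; lra).
          unfold ic in *. lra. }
      replace c' with (c - Z.of_nat (Z.to_nat (c - c')))%Z by lia.
      apply Hgen. lia.
  - intros d' Hd'.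
    assert (Hgen : forall k : nat, (dmin <= d - Z.of_nat k)%Z ->
                ic a p c d c (d - Z.of_nat k)%Z).
    { induction k as [|k IH]; intros Hk.
      - unfold ic. rewrite Z.sub_0_r. lra.
      - assert (Hx : (d - Z.of_nat (S k) = (d - Z.of_nat k) - 1)%Z) by lia.
        rewrite Hx.
        set (y := (d - Z.of_nat k)%Z) in *.
        specialize (IH ltac:(lia)).
        destruct HT as [HT1 HT2].
        assert (HyT : inT cmin cmax dmin dmax c y) by (split; lia).
        assert (Hs := Hdd c y HyT ltac:(lia)).
        unfold ic in *. lra. }
    replace d' with (d - Z.of_nat (Z.to_nat (d - d')))%Z by lia.
    apply Hgen. lia.
Qed.
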